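(* Let $\lambda\in[-1,1)$. Every continuous $\lambda$-curve $\gamma:I\to\mathbb{R}^d$ has the $\lambda$-cone property.
   Context: $\mathbb{R}^d$ carries the Euclidean inner product $\langle\cdot,\cdot\rangle$ and norm $\|\cdot\|$; $I\subset\mathbb{R}$ is an interval; $\mathbb{S}^{d-1}$ is the unit sphere. $\gamma$ is a $\lambda$-curve if for all $t_1\le t_2\le t_3$ in $I$: $\|\gamma(t_1)-\gamma(t_2)\|\le\|\gamma(t_1)-\gamma(t_3)\|+\lambda\|\gamma(t_2)-\gamma(t_3)\|$. For $t\in I$, the set of forward secants is $\mathrm{sec}^+(t)=\{q\in\mathbb{S}^{d-1}: q=\lim_k \frac{\gamma(t_k)-\gamma(t)}{\|\gamma(t_k)-\gamma(t)\|}$ for some sequence $t_k\to t$ with $t_k>t\}$. A continuous curve $\gamma$ has the $\lambda$-cone property if for every $t\in I$, every $q\in\mathrm{sec}^+(t)$ and every $u\in I$ with $u<t$: $\big\langle q,\frac{\gamma(u)-\gamma(t)}{\|\gamma(u)-\gamma(t)\|}\big\rangle\le\lambda$. *)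

(* Defs.v *)
From HB Require Import structures.
From mathcomp Require Import all_boot all_order all_algebra.
From mathcomp Require Import all_classical all_reals all_analysis.
Set Implicit Arguments. Unset Strict Implicit. Unset Printing Implicit Defensive.
Import Order.TTheory GRing.Theory Num.Theory.
Import numFieldNormedType.Exports.
Local Open Scope classical_set_scope.
Local Open Scope ring_scope.

Definition dotv {R : realType} {d : nat} (u v : 'rV[R]_d) : R :=
  \sum_(i < d) u 0 i * v 0 i.

Definition enorm {R : realType} {d : nat} (u : 'rV[R]_d) : R :=
  Num.sqrt (dotv u u).

Definition lambda_curve {R : realType} {d : nat} (I : set R) (lam : R)
  (gamma : R -> 'rV[R]_d) : Prop :=
  forall t1 t2 t3, I t1 -> I t2 -> I t3 -> t1 <= t2 -> t2 <= t3 ->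
    enorm (gamma t1 - gamma t2)
      <= enorm (gamma t1 - gamma t3) + lam * enorm (gamma t2 - gamma t3).

Definition forward_secant {R : realType} {d : nat} (I : set R)
  (gamma : R -> 'rV[R]_d) (t : R) (q : 'rV[R]_d) : Prop :=
  enorm q = 1 /\
  exists tk : nat -> R,
    (forall k, I (tk k)) /\ (forall k, t < tk k) /\
    (forall k, gamma (tk k) != gamma t) /\
    tk @ \oo --> t /\
    (fun k => (enorm (gamma (tk k) - gamma t))^-1 *: (gamma (tk k) - gamma t))
      @ \oo --> q.

(* lambda-cone property (for a continuous curve; continuity is a separate
   hypothesis). The normalized vector is only defined when gamma u <> gamma t. *)
Definition lambda_cone_property {R : realType} {d : nat} (I : set R) (lam : R)
  (gamma : R -> 'rV[R]_d) : Prop :=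
  forall t, I t -> forall q, forward_secant I gamma t q ->
  forall u, I u -> u < t -> gamma u != gamma t ->
    dotv q ((enorm (gamma u - gamma t))^-1 *: (gamma u - gamma t)) <= lam.

(* Main.v *)
Set Warnings "-all".
Require Import Defs.
From HB Require Import structures.
From mathcomp Require Import all_boot all_order all_algebra.
From mathcomp Require Import all_classical all_reals all_analysis.
From mathcomp Require Import ring lra.
Import Order.TTheory GRing.Theory Num.Theory.
Import numFieldNormedType.Exports.
Local Open Scope classical_set_scope.
Local Open Scope ring_scope.

Section Aux.
Context {R : realType} {d : nat}.
Implicit Types u v w : 'rV[R]_d.

Lemma dotvC u v : dotv u v = dotv v u.
Proof. by apply: eq_bigr => i _; rewrite mulrC. Qed.

Lemma dotvBl u v w : dotv (u - v) w = dotv u w - dotv v w.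
Proof. by rewrite /dotv -sumrB; apply: eq_bigr => i _; rewrite !mxE mulrBl. Qed.

Lemma dotvBr u v w : dotv w (u - v) = dotv w u - dotv w v.
Proof. by rewrite dotvC dotvBl !(dotvC w). Qed.

Lemma dotvZl c u v : dotv (c *: u) v = c * dotv u v.
Proof. by rewrite /dotv mulr_sumr; apply: eq_bigr => i _; rewrite !mxE mulrA. Qed.

Lemma dotvZr c u v : dotv v (c *: u) = c * dotv v u.
Proof. by rewrite dotvC dotvZl dotvC. Qed.

Lemma dotv_ge0 u : 0 <= dotv u u.
Proof. by apply: sumr_ge0 => i _; rewrite -expr2 sqr_ge0. Qed.

Lemma enorm_sq u : enorm u ^+ 2 = dotv u u.
Proof. by rewrite /enorm sqr_sqrtr // dotv_ge0. Qed.

Lemma enorm_ge0 u : 0 <= enorm u.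
Proof. exact: sqrtr_ge0. Qed.

Lemma enormN u : enorm (- u) = enorm u.
Proof. by rewrite /enorm /dotv; congr Num.sqrt; apply: eq_bigr => i _; rewrite !mxE mulrNN. Qed.

Lemma enorm_gt0 u : u != 0 -> 0 < enorm u.
Proof.
move=> u0; rewrite lt_neqAle enorm_ge0 andbT eq_sym; apply/negP => /eqP.
rewrite /enorm => /eqP; rewrite sqrtr_eq0 => le0.
have /eqP H : dotv u u == 0 by rewrite eq_le le0 dotv_ge0.
move/psumr_eq0P: H => H.
have {}H : forall j, u 0 j * u 0 j = 0 by move=> j; apply: H => // k _; rewrite -expr2 sqr_ge0.
apply/negP: u0; rewrite negbK; apply/eqP/matrixP => i j.
by rewrite ord1 mxE; have := H j; rewrite -expr2 => /eqP; rewrite sqrf_eq0 => /eqP->.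
Qed.

Lemma dotv_cvg {T} (F : set_system T) {FF : Filter F} (f g : T -> 'rV[R]_d) v w :
  f @ F --> v -> g @ F --> w -> dotv (f x) (g x) @[x --> F] --> dotv v w.
Proof.
move=> fv gw; rewrite /dotv; apply: (@cvg_big _ _ +%R 0 xpredT) => //.
  by move=> [x y]; apply: add_continuous.
move=> i _; apply: cvgM.
  by apply: (@continuous_cvg _ _ _ _ _ f (fun M : 'rV[R]_d => M 0 i)) => //; exact: coord_continuous.
by apply: (@continuous_cvg _ _ _ _ _ g (fun M : 'rV[R]_d => M 0 i)) => //; exact: coord_continuous.
Qed.

Lemma enorm_cvg {T} (F : set_system T) {FF : Filter F} (f : T -> 'rV[R]_d) v :
  f @ F --> v -> enorm (f x) @[x --> F] --> enorm v.
Proof.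
move=> fv; rewrite /enorm.
apply: (@continuous_cvg _ _ _ _ _ (fun x => dotv (f x) (f x)) Num.sqrt) => //.
  exact: sqrt_continuous.
exact: dotv_cvg.
Qed.
End Aux.

Theorem proposition2p6 (R : realType) (d : nat) (I : set R) (lam : R)
  (gamma : R -> 'rV[R]_d) :
  is_interval I ->
  -1 <= lam -> lam < 1 ->
  {within I, continuous gamma} ->
  lambda_curve I lam gamma ->
  lambda_cone_property I lam gamma.
Proof.
move=> _ lamm1 lam1 cont lc t It q [q1 [tk [Itk [ttk [neq [tkt qk]]]]]] u Iu ut nu.
set a := gamma u - gamma t; set A := enorm a.
have A0 : 0 < A by apply: enorm_gt0; rewrite subr_eq0.
set h := fun k => gamma (tk k) - gamma t; set e := fun k => enorm (h k).
have e0 : forall k, 0 < e k by move=> k; apply: enorm_gt0; rewrite subr_eq0.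
have gk : (gamma \o tk) @ \oo --> gamma t.
  have tkw : tk @ \oo --> within I (nbhs t).
    move=> P /= nP; change (\forall n \near \oo, P (tk n)); near=> n.
    suff : I (tk n) -> P (tk n) by apply; exact: Itk.
    near: n; exact: (tkt _ nP).
  have := (subspace_continuousP I gamma).1 cont t It.
  exact: cvg_trans (cvg_app _ tkw).
have hk : h @ \oo --> (0 : 'rV[R]_d).
  rewrite -(subrr (gamma t)); apply: cvgB => //; exact: cvg_cst.
have ek : e @ \oo --> 0.
  have -> : (0 : R) = enorm (0 : 'rV[R]_d).
    by rewrite /enorm /dotv big1 ?sqrtr0 // => i _; rewrite mxE mul0r.
  exact: enorm_cvg.
set C := (1 - lam ^+ 2) / (2 * A).
set b := A^-1 *: a.
have key : \forall k \near \oo, dotv ((e k)^-1 *: h k) b - e k * C <= lam.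
  have := cvgr_lt _ ek (A / 2); rewrite divr_gt0 // => /(_ _ isT).
  apply: filterS => k ekA.
  have lck := lc u t (tk k) Iu It (Itk k) (ltW ut) (ltW (ttk k)).
  move: lck.
  have -> : gamma u - gamma (tk k) = a - h k by rewrite /a /h opprB addrA subrK.
  have -> : gamma t - gamma (tk k) = - h k by rewrite /h opprB.
  rewrite enormN -/A -/(e k) => lck.
  set E := e k in ekA lck *; set N := enorm (a - h k) in lck.
  have E0 := e0 k; rewrite -/E in E0.
  have N2 : N ^+ 2 = A ^+ 2 - 2 * dotv a (h k) + E ^+ 2.
    rewrite /N /E /e /A !enorm_sq dotvBl (dotvBr a (h k) a) (dotvBr a (h k) (h k)) (dotvC (h k) a); lra.
  set X := dotv a (h k) in N2.
  have N0 : 0 <= N := enorm_ge0 _.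
  have l1 : lam * E <= E by nra.
  have l2 : 0 <= A - lam * E by lra.
  have l3 : 0 <= N - (A - lam * E) by lra.
  have l4 : 0 <= N + (A - lam * E) by lra.
  have sq : (A - lam * E) ^+ 2 <= N ^+ 2.
    have := mulr_ge0 l3 l4; rewrite !expr2; lra.
  rewrite /b dotvZl dotvZr dotvC -/X.
  have -> : E^-1 * (A^-1 * X) - E * C = (X - E ^+ 2 * (1 - lam ^+ 2) / 2) / (E * A).
    by rewrite /C; field; rewrite ?gt_eqF.
  rewrite ler_pdivrMr ?mulr_gt0 //; nra.
have conv : (fun k => dotv ((e k)^-1 *: h k) b - e k * C) @ \oo --> dotv q b - 0 * C.
  apply: cvgB; first by apply: dotv_cvg => //; exact: cvg_cst.
  exact: cvgMl.
have := cvgr_to_le conv key; rewrite mul0r subr0; apply; typeclasses eauto.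
Unshelve. all: by end_near. Qed.
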